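(* Let $C$ be a coalgebra over a field $k$ with a coradical basis $\mathcal B$, and let $M$ be a finite dimensional local right coideal of $C$ which is $\mathcal B$-supported. Then the set $(\mathcal B\cap M)\setminus \mathrm{Jac}(M)$ is nonempty, and $M$ is generated as a right $C$-comodule by any element of this set.
   Context: The coradical $C_0$ of $C$ is the sum of all simple subcoalgebras of $C$. For subspaces $U,V\subseteq C$, $U\wedge V=\Delta^{-1}(U\otimes C+C\otimes V)$. The coradical filtration is $C_0\subseteq C_1\subseteq\cdots$ with $C_n=C_0\wedge C_{n-1}$ for $n\geq1$. A coradical basis of $C$ is a $k$-basis $\mathcal B$ of $C$ such that $\mathcal B\cap C_n$ is a basis of $C_n$ for all $n$. A right coideal $M$ (a right subcomodule of $C$) is $\mathcal B$-supported if $\mathcal B\cap M$ is a $k$-basis of $M$. A nonzero comodule is local if it has a unique maximal subcomodule. $\mathrm{Jac}(M)$ denotes the Jacobson radical of $M$ (the intersection of its maximal subcomodules). *)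

(* Defs.v *)
From HB Require Import structures.
From mathcomp Require Import all_boot all_order all_algebra.
From mathcomp Require Import finmap.
Set Implicit Arguments. Unset Strict Implicit. Unset Printing Implicit Defensive.
Import GRing.Theory.
Local Open Scope ring_scope.

(* A coalgebra C over a field k, presented through a k-basis indexed by B:
   C = k^(B) (finitely supported functions B -> k), and
   C (x) C = k^(B x B), u (x) c = ((b1,b2) |-> u b1 * c b2).
   Comultiplication: Delta(e_b) = sum_p cdelta b p  e_{p.1} (x) e_{p.2};
   counit: eps(e_b) = ceps b.  The axioms are coassociativity and the
   two counit laws, written coefficientwise on basis elements. *)
Record coalgebra (k : fieldType) (B : choiceType) := Coalgebra {
  cdelta : B -> {fsfun (B * B)%type -> k with 0};
  ceps : B -> k;
  cdelta_coassoc : forall b b1 b2 b3 : B,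
    \sum_(p <- finsupp (cdelta b)) (p.2 == b3)%:R * cdelta b p * cdelta p.1 (b1, b2)
    = \sum_(p <- finsupp (cdelta b)) (p.1 == b1)%:R * cdelta b p * cdelta p.2 (b2, b3);
  ceps_counitl : forall b b2 : B,
    \sum_(p <- finsupp (cdelta b)) (p.2 == b2)%:R * ceps p.1 * cdelta b p = (b == b2)%:R;
  ceps_counitr : forall b b1 : B,
    \sum_(p <- finsupp (cdelta b)) (p.1 == b1)%:R * ceps p.2 * cdelta b p = (b == b1)%:R
}.

Section Coalg.
Variables (k : fieldType) (B : choiceType) (CC : coalgebra k B).

Definition elt := {fsfun B -> k with 0}.

Inductive inspan (X : Type) (S : (X -> k) -> Prop) : (X -> k) -> Prop :=
| inspan0 f : (forall x, f x = 0) -> inspan S f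
| inspanS f g h (a : k) : S g -> inspan S h ->
    (forall x, f x = a * g x + h x) -> inspan S f.

Definition spanC (S : elt -> Prop) (v : elt) : Prop :=
  inspan (fun f : B -> k => exists u : elt, S u /\ forall b, f b = u b) v.

Definition Delta (v : elt) : (B * B)%type -> k :=
  fun p => \sum_(b <- finsupp v) v b * cdelta CC b p.

Definition subspace (U : elt -> Prop) : Prop :=
  (forall w : elt, (forall b, w b = 0) -> U w) /\
  (forall (a : k) (u v w : elt), U u -> U v ->
     (forall b, w b = a * u b + v b) -> U w).

Definition is_zero (U : elt -> Prop) : Prop := forall x, U x -> forall b, x b = 0.
Definition subset (U V : elt -> Prop) : Prop := forall x, U x -> V x.

Definition tens_span (U V : elt -> Prop) : ((B * B)%type -> k) -> Prop :=
  inspan (fun t => exists u v : elt, U u /\ V v /\ forall p, t p = u p.1 * v p.2).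

Definition allC : elt -> Prop := fun _ => True.

Definition subcoalgebra (D : elt -> Prop) : Prop :=
  subspace D /\ forall x, D x -> tens_span D D (Delta x).

Definition simple_subcoalgebra (D : elt -> Prop) : Prop :=
  subcoalgebra D /\ ~ is_zero D /\
  forall E, subcoalgebra E -> subset E D -> is_zero E \/ subset D E.

Definition coradical : elt -> Prop :=
  spanC (fun w => exists D, simple_subcoalgebra D /\ D w).

(* U /\ V = Delta^{-1}(U (x) C + C (x) V) *)
Definition wedge (U V : elt -> Prop) : elt -> Prop :=
  fun x => inspan (fun t =>
     (exists u c : elt, U u /\ forall p, t p = u p.1 * c p.2) \/
     (exists c v : elt, V v /\ forall p, t p = c p.1 * v p.2)) (Delta x).

Fixpoint corad_filt (n : nat) : elt -> Prop :=
  match n with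
  | 0 => coradical
  | n'.+1 => wedge coradical (corad_filt n')
  end.

Definition is_basis_vec (b : B) (w : elt) : Prop := forall x, w x = (x == b)%:R.

(* B /\ U spans U (B is a basis of C, so B /\ U is then a basis of U) *)
Definition B_supported (U : elt -> Prop) : Prop :=
  forall v, U v -> spanC (fun w => U w /\ exists b, is_basis_vec b w) v.

Definition coradical_basis : Prop := forall n, B_supported (corad_filt n).

Definition right_coideal (M : elt -> Prop) : Prop :=
  subspace M /\ forall x, M x -> tens_span M allC (Delta x).

Definition finite_dim (M : elt -> Prop) : Prop :=
  exists s : seq elt, forall v, M v -> spanC (fun w => w \in s) v.

Definition subcomodule (M N : elt -> Prop) : Prop :=
  subset N M /\ right_coideal N.

Definition maximal_subcomodule (M N : elt -> Prop) : Prop :=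
  subcomodule M N /\ ~ subset M N /\
  forall N', subcomodule M N' -> subset N N' -> subset N' N \/ subset M N'.

Definition local_comodule (M : elt -> Prop) : Prop :=
  ~ is_zero M /\
  exists N, maximal_subcomodule M N /\
    forall N', maximal_subcomodule M N' -> subset N N' /\ subset N' N.

Definition Jac (M : elt -> Prop) : elt -> Prop :=
  fun x => M x /\ forall N, maximal_subcomodule M N -> N x.

Definition generated_by (M : elt -> Prop) (x : elt) : Prop :=
  M x /\ forall N, subcomodule M N -> N x -> subset M N.

End Coalg.

(* Main.v *)
Require Import Defs.
From HB Require Import structures.
From mathcomp Require Import all_boot all_order all_algebra.
From mathcomp Require Import finmap.
From Stdlib Require Import Classical Lia.
From mathcomp Require Import zify.
Set Implicit Arguments. Unset Strict Implicit. Unset Printing Implicit Defensive.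
Import GRing.Theory.
Local Open Scope ring_scope.

Definition gen (k : fieldType) (B : choiceType) (G : elt k B -> Prop) (f : B -> k) :=
  exists u : elt k B, G u /\ forall b, f b = u b.

Lemma inspan_indP (k : fieldType) (B : choiceType) (S Q : (B -> k) -> Prop) :
  (forall f, (forall x, f x = 0) -> Q f) ->
  (forall f g h a, S g -> Q h -> (forall x, f x = a * g x + h x) -> Q f) ->
  forall f, inspan S f -> Q f.
Proof.
move=> H0 HS f; elim=> [f' /H0 //| f' g h a Sg _ IH E]; exact: HS Sg IH E.
Qed.

Definition mkelt (k : fieldType) (B : choiceType) (S : {fset B}) (h : B -> k) : elt k B :=
  [fsfun x in S => h x].

Lemma mkeltE (k : fieldType) (B : choiceType) (S : {fset B}) (h : B -> k) x :
  mkelt S h x = if x \in S then h x else 0.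
Proof. by rewrite /mkelt fsfun_fun. Qed.

Lemma mkelt_lin (k : fieldType) (B : choiceType) (u v : elt k B) a b :
  mkelt (finsupp u `|` finsupp v)%fset (fun x => a * u x + v x) b = a * u b + v b.
Proof.
rewrite mkeltE in_fsetU !mem_finsupp; case: ifP => // /negbT.
by rewrite negb_or !negbK => /andP[/eqP -> /eqP ->]; rewrite mulr0 addr0.
Qed.

Lemma subspace_ext (k : fieldType) (B : choiceType) (U : elt k B -> Prop) (u w : elt k B) :
  subspace U -> U u -> (forall b, u b = w b) -> U w.
Proof.
case=> H0 Hc Uu E.
apply: (Hc 1 u (mkelt fset0 (fun _ => 0)) w Uu).
  by apply: H0 => b; rewrite mkeltE in_fset0.
by move=> b; rewrite mkeltE in_fset0 mul1r addr0 E.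
Qed.

Lemma span_sub (k : fieldType) (B : choiceType) (U G : elt k B -> Prop) :
  subspace U -> (forall u, G u -> U u) ->
  forall f, inspan (gen G) f -> exists u : elt k B, U u /\ forall b, u b = f b.
Proof.
move=> sU GU; apply: inspan_indP.
  move=> f f0; exists (mkelt fset0 (fun _ => 0)); split.
    by case: sU => H0 _; apply: H0 => b; rewrite mkeltE in_fset0.
  by move=> b; rewrite mkeltE in_fset0 f0.
move=> f g h a [ug [Gug Eg]] [uh [Uuh Eh]] Ef.
exists (mkelt (finsupp ug `|` finsupp uh)%fset (fun x => a * ug x + uh x)); split.
  case: sU => _ Hc; apply: (Hc a ug uh _ (GU _ Gug) Uuh) => b.
  by rewrite mkelt_lin.
by move=> b; rewrite mkelt_lin Ef Eg Eh.
Qed.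

Lemma span_in (k : fieldType) (B : choiceType) (U G : elt k B -> Prop) (v : elt k B) :
  subspace U -> (forall u, G u -> U u) -> spanC G v -> U v.
Proof.
move=> sU GU /(span_sub sU GU) [u [Uu E]]; exact: subspace_ext sU Uu E.
Qed.

Definition phi (k : fieldType) (B : choiceType) (sb : seq B) (f : B -> k) : 'rV[k]_(size sb) :=
  \row_(i < size sb) f (tnth (in_tuple sb) i).

Lemma phi_lin (k : fieldType) (B : choiceType) (sb : seq B) (f g h : B -> k) a :
  (forall x, f x = a * g x + h x) -> phi sb f = a *: phi sb g + phi sb h.
Proof. by move=> E; apply/rowP => i; rewrite !mxE E. Qed.

Lemma phi_span (k : fieldType) (B : choiceType) (sb : seq B) (G : elt k B -> Prop)
  (L : seq (elt k B)) :
  (forall u, u \in L -> G u) ->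
  forall r, r \in <<map (fun u : elt k B => phi sb u) L>>%VS ->
  exists f, inspan (gen G) f /\ phi sb f = r.
Proof.
elim: L => [|x L IH] HL r /=.
  rewrite span_nil memv0 => /eqP ->; exists (fun _ => 0); split.
    by apply: inspan0.
  by apply/rowP => i; rewrite !mxE.
rewrite span_cons => /memv_addP [r1 /vlineP [a ->] [r2 Hr2 ->]].
have [f [Sf Ef]] : exists f, inspan (gen G) f /\ phi sb f = r2.
  by apply: IH Hr2 => u uL; apply: HL; rewrite inE uL orbT.
exists (fun b => a * x b + f b); split.
  apply: (@inspanS _ _ _ _ (fun b => x b) f a _ Sf) => //.
  by exists x; split => //; apply: HL; rewrite inE eqxx.
by rewrite (@phi_lin _ _ sb _ (fun b => x b) f a) // Ef.
Qed.

Lemma in_P (k : fieldType) (B : choiceType) (sb : seq B) (M P : elt k B -> Prop)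
  (HM : forall v, M v -> forall b, b \notin sb -> v b = 0)
  (L : seq (elt k B)) (v : elt k B) :
  subspace P -> Defs.subset P M -> (forall u, u \in L -> P u) -> M v ->
  phi sb v \in <<map (fun u : elt k B => phi sb u) L>>%VS -> P v.
Proof.
move=> sP PM HL Mv /(phi_span HL) [f [Sf Ef]].
have fv : forall b, b \notin sb -> f b = 0.
  move: f Sf {Ef}; apply: inspan_indP.
    by move=> f f0 b _; rewrite f0.
  move=> f g h a [u [Pu Eu]] IH Ef b bn.
  by rewrite Ef IH // Eu (HM u (PM u Pu) b bn) mulr0 addr0.
have [u [Pu Eu]] := span_sub sP (fun u (H : P u) => H) Sf.
apply: (subspace_ext sP Pu) => b; rewrite Eu.
case: (boolP (b \in sb)) => [/seq_tnthP [i ->] | bn].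
  by move/rowP: Ef => /(_ i); rewrite !mxE.
by rewrite fv // HM.
Qed.

Lemma exists_max_aux (k : fieldType) (B : choiceType) (CC : coalgebra k B)
  (sb : seq B) (M : elt k B -> Prop)
  (HM : forall v, M v -> forall b, b \notin sb -> v b = 0) (m : nat) :
  forall (P : elt k B -> Prop), subcomodule CC M P -> ~ Defs.subset M P ->
  forall L : seq (elt k B), (forall u, u \in L -> P u) ->
  (size sb <= \dim <<map (fun u : elt k B => phi sb u) L>>%VS + m)%N ->
  exists Nm, maximal_subcomodule CC M Nm /\ Defs.subset P Nm.
Proof.
elim: m => [|m IH] P sP nMP L HL Hd;
  (case: (classic (forall N', subcomodule CC M N' -> Defs.subset P N' ->
            Defs.subset N' P \/ Defs.subset M N')) => [Hmax|Hnot];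
   [by exists P; split => //; split => // | ]);
  (have [N' HN'] : exists N', ~ (subcomodule CC M N' -> Defs.subset P N' ->
            Defs.subset N' P \/ Defs.subset M N') by apply: not_all_ex_not);
  (have [sN' [PN' [nN'P nMN']]] : subcomodule CC M N' /\ Defs.subset P N' /\
      ~ Defs.subset N' P /\ ~ Defs.subset M N' by tauto);
  (have [v [N'v nPv]] : exists v, N' v /\ ~ P v
     by apply: NNPP => H; apply: nN'P => x N'x; apply: NNPP => nPx; apply: H; exists x);
  have Mv : M v := sN'.1 v N'v;
  (have nin : phi sb v \notin <<map (fun u : elt k B => phi sb u) L>>%VS
     by apply/negP => Hin; apply: nPv; exact: (in_P HM sP.2.1 sP.1 HL Mv Hin)).
  move: Hd; rewrite addn0 => Hd.
  have HU : (<<map (fun u : elt k B => phi sb u) L>>%VS == fullv).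
    rewrite eqEdim subvf /= dimvf.
    by rewrite (@dim_matrix k 1 (size sb)) mul1r.
  by move: nin; rewrite (eqP HU) memvf.
have [Nm [maxNm N'Nm]] : exists Nm, maximal_subcomodule CC M Nm /\ Defs.subset N' Nm.
  apply: (IH N' sN' nMN' (v :: L)).
    by move=> u; rewrite inE => /orP [/eqP -> // | /HL /PN'].
  rewrite /= span_cons.
  set U := <<_>>%VS.
  have lt : (\dim U < \dim (<[phi sb v]> + U)%VS)%N.
    rewrite (ltn_leqif (dimv_leqif_eq (addvSr _ _))).
    apply/negP => /eqP E; move: nin; rewrite -/U E.
    by rewrite (subvP (addvSl _ _)) // memv_line.
  by move: Hd lt; rewrite -/U addnS; lia.
by exists Nm; split => // x /PN' /N'Nm.
Qed.

Theorem mainTheorem3 (k : fieldType) (B : choiceType) (CC : coalgebra k B)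
  (M : elt k B -> Prop) :
  coradical_basis CC ->
  right_coideal CC M -> finite_dim M -> local_comodule CC M ->
  B_supported M ->
  (exists (b : B) (w : elt k B), is_basis_vec b w /\ M w /\ ~ Jac CC M w) /\
  (forall (b : B) (w : elt k B), is_basis_vec b w -> M w -> ~ Jac CC M w ->
     generated_by CC M w).
Proof.
move=> _ rcM [s Hs] [nz [N0 [maxN0 uniq]]] BS.
have JacE : forall w, M w -> Jac CC M w <-> N0 w.
  move=> w Mw; split; first by case=> _; apply.
  move=> N0w; split => // N' /uniq [H _]; exact: H.
have sN0 : subspace N0 := maxN0.1.2.1.
split.
  apply: NNPP => H; apply: maxN0.2.1 => v Mv.
  apply: (span_in sN0 _ (BS v Mv)) => u [Mu [b bu]].
  apply/(JacE u Mu); apply: NNPP => nJ; apply: H; exists b, u; tauto.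
pose sb := flatten [seq enum_fset (finsupp u) | u <- s].
have HM : forall v, M v -> forall b, b \notin sb -> v b = 0.
  move=> v Mv b bn; move: (Hs v Mv); rewrite /spanC.
  apply: (inspan_indP (Q := fun f : B -> k => f b = 0)) => //.
  move=> f g h a [u [us Eu]] Eh Ef; rewrite Ef Eh Eu addr0.
  have : b \notin finsupp u.
    by apply: contra bn => Hb; apply/flatten_mapP; exists u.
  by rewrite mem_finsupp negbK => /eqP ->; rewrite mulr0.
move=> b w bw Mw nJ; split => // N' sN' N'w.
apply: NNPP => nMN'.
have [Nm [maxNm N'Nm]] :
    exists Nm, maximal_subcomodule CC M Nm /\ Defs.subset N' Nm.
  apply: (@exists_max_aux k B CC sb M HM (size sb) N' sN' nMN' [::]).
    by move=> u; rewrite in_nil.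
  by rewrite leq_addl.
apply: nJ; apply/(JacE w Mw).
by have [_ H] := uniq Nm maxNm; apply: H; apply: N'Nm.
Qed.
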